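(* Fix an integer $n\ge 1$. For every formula $\varphi$ in the variables $x_1,\dots,x_n$, $\chi^+([\varphi]_\equiv)$, computed in $\mathcal{NM}^-_n$, equals the number of Boolean assignments $\mu:\{x_1,\dots,x_n\}\to\{0,1\}$ such that $\varphi$ evaluates to $1$ under $\mu$ in the two-element NM chain.
   Context: An NM algebra is an algebra $\langle A,\wedge,\vee,\odot,\to,\bot,\top\rangle$ such that $(A,\wedge,\vee,\bot,\top)$ is a bounded lattice, $\langle A,\odot,\top\rangle$ is a commutative monoid, and for all $x,y,z$: $x\odot y\le z$ iff $x\le y\to z$; $(x\to y)\vee(y\to x)=\top$; $\neg(x\odot y)\vee((x\wedge y)\to(x\odot y))=\top$ where $\neg x:=x\to\bot$; and $\neg\neg x=x$. An NM$^-$ algebra is an NM algebra additionally satisfying $\neg(\neg x^2)^2\leftrightarrow(\neg(\neg x)^2)^2=\top$, where $y^2:=y\odot y$ and $u\leftrightarrow v:=(u\to v)\odot(v\to u)$. $\mathcal{NM}^-_n$ is the free NM$^-$ algebra on $n$ generators, i.e. the Lindenbaum algebra of formulas in $x_1,\dots,x_n$ modulo equivalence in the logic NM$^-$; $[\varphi]_\equiv$ is the class of $\varphi$. It is a finite distributive lattice. A valuation on a distributive lattice $L$ is a map $\nu:L\to\mathbb{R}$ with $\nu(x)+\nu(y)=\nu(x\vee y)+\nu(x\wedge y)$; on a finite distributive lattice it is uniquely determined by its values on join-irreducible elements and on $\bot$. An element is join-irreducible if it is not $\bot$ and $x=y\vee z$ implies $x=y$ or $x=z$. The idempotent Euler characteristic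 $\chi^+:\mathcal{NM}^-_n\to\mathbb{R}$ is the unique valuation with $\chi^+(\bot)=0$ and, for each join-irreducible $g$, $\chi^+(g)=1$ if $g\odot g=g$ and $\chi^+(g)=0$ otherwise. *)

(* Defs.v *)
From mathcomp Require Import all_boot.
From Stdlib Require Import Reals.

Set Implicit Arguments.
Unset Strict Implicit.
Unset Printing Implicit Defensive.

Inductive form (n : nat) : Type :=
| FVar of 'I_n
| FBot
| FTop
| FAnd of form n & form n
| FOr of form n & form n
| FConj of form n & form n
| FImp of form n & form n.

Arguments FBot {n}.
Arguments FTop {n}.

Record nm_ops (A : Type) := NMOps {
  o_meet : A -> A -> A;
  o_join : A -> A -> A;
  o_mul  : A -> A -> A;
  o_imp  : A -> A -> A;
  o_bot  : A;
  o_top  : A }.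

Section Alg.
Variables (A : Type) (o : nm_ops A).

Definition o_le (x y : A) : Prop := o_meet o x y = x.
Definition o_neg (x : A) : A := o_imp o x (o_bot o).
Definition o_sq (x : A) : A := o_mul o x x.
Definition o_biimp (u v : A) : A := o_mul o (o_imp o u v) (o_imp o v u).

Record is_NM : Prop := {
  meetC : forall x y, o_meet o x y = o_meet o y x;
  joinC : forall x y, o_join o x y = o_join o y x;
  meetA : forall x y z, o_meet o x (o_meet o y z) = o_meet o (o_meet o x y) z;
  joinA : forall x y z, o_join o x (o_join o y z) = o_join o (o_join o x y) z;
  meetJ : forall x y, o_meet o x (o_join o x y) = x;
  joinM : forall x y, o_join o x (o_meet o x y) = x;
  botP  : forall x, o_le (o_bot o) x;
  topP  : forall x, o_le x (o_top o);
  mulC  : forall x y, o_mul o x y = o_mul o y x;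
  mulA  : forall x y z, o_mul o x (o_mul o y z) = o_mul o (o_mul o x y) z;
  mul1  : forall x, o_mul o x (o_top o) = x;
  resid : forall x y z, o_le (o_mul o x y) z <-> o_le x (o_imp o y z);
  prelin : forall x y, o_join o (o_imp o x y) (o_imp o y x) = o_top o;
  nmax  : forall x y, o_join o (o_neg (o_mul o x y))
                        (o_imp o (o_meet o x y) (o_mul o x y)) = o_top o;
  invol : forall x, o_neg (o_neg x) = x }.

Definition is_NMm : Prop :=
  is_NM /\
  forall x, o_biimp (o_neg (o_sq (o_neg (o_sq x))))
                    (o_sq (o_neg (o_sq (o_neg x)))) = o_top o.

Fixpoint eval (n : nat) (v : 'I_n -> A) (f : form n) : A :=
  match f with
  | FVar i => v i
  | FBot => o_bot o
  | FTop => o_top o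
  | FAnd a b => o_meet o (eval v a) (eval v b)
  | FOr a b => o_join o (eval v a) (eval v b)
  | FConj a b => o_mul o (eval v a) (eval v b)
  | FImp a b => o_imp o (eval v a) (eval v b)
  end.

End Alg.

Definition bool_ops : nm_ops bool := NMOps andb orb andb implb false true.

(** Equivalence in the logic NM^-: by algebraizability, phi and psi are
    logically equivalent iff they are equal in every NM^- algebra under
    every assignment.  The Lindenbaum algebra NM^-_n is form n modulo this. *)
Definition nm_equiv (n : nat) (a b : form n) : Prop :=
  forall (A : Type) (o : nm_ops A), is_NMm o ->
    forall v : 'I_n -> A, eval o v a = eval o v b.

Definition join_irred (n : nat) (g : form n) : Prop :=
  ~ nm_equiv g FBot /\
  forall a b : form n, nm_equiv g (FOr a b) -> nm_equiv g a \/ nm_equiv g b.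

Definition idempotent (n : nat) (g : form n) : Prop :=
  nm_equiv (FConj g g) g.

(** nu is (the representative-level presentation of) a real-valued function on
    NM^-_n satisfying the defining properties of chi^+. *)
Definition is_chi_plus (n : nat) (nu : form n -> R) : Prop :=
  (forall a b, nm_equiv a b -> nu a = nu b) /\
  (forall a b, (nu a + nu b = nu (FOr a b) + nu (FAnd a b))%R) /\
  nu FBot = 0%R /\
  (forall g, join_irred g ->
     (idempotent g -> nu g = 1%R) /\ (~ idempotent g -> nu g = 0%R)).

(* Main.v *)
Require Import Defs.
From mathcomp Require Import all_boot.
From Stdlib Require Import Reals.
From Stdlib Require Import Classical ClassicalDescription.
From mathcomp Require classical_sets.
From mathcomp Require Import zify.
From Stdlib Require Import Lia Lra.
From Stdlib Require List.

Set Implicit Arguments.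
Unset Strict Implicit.
Unset Printing Implicit Defensive.


Section NMT.
Variables (A : Type) (o : nm_ops A) (H : is_NM o).
Local Notation mt := (o_meet o).
Local Notation jn := (o_join o).
Local Notation ml := (o_mul o).
Local Notation im := (o_imp o).
Local Notation bt := (o_bot o).
Local Notation tp := (o_top o).
Local Notation le := (o_le o).
Local Notation ng := (o_neg o).

Lemma resL x y z : le (ml x y) z -> le x (im y z).
Proof. by move/(resid H). Qed.
Lemma resR x y z : le x (im y z) -> le (ml x y) z.
Proof. by move/(resid H). Qed.
Lemma mt_id x : mt x x = x.
Proof. have h := meetJ H x (mt x x). by rewrite joinM in h. Qed.
Lemma le_refl x : le x x. Proof. exact: mt_id. Qed.
Lemma le_trans x y z : le x y -> le y z -> le x z.
Proof. rewrite /o_le => h1 h2. by rewrite -h1 -meetA // h2. Qed.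
Lemma le_anti x y : le x y -> le y x -> x = y.
Proof. rewrite /o_le => h1 h2. by rewrite -h1 meetC. Qed.
Lemma mt_l x y : le (mt x y) x.
Proof. by rewrite /o_le (meetC H x y) -meetA // mt_id. Qed.
Lemma mt_r x y : le (mt x y) y.
Proof. by rewrite /o_le -meetA // mt_id. Qed.
Lemma mt_glb x y z : le z x -> le z y -> le z (mt x y).
Proof. rewrite /o_le => h1 h2. by rewrite meetA // h1 h2. Qed.
Lemma le_jn x y : le x y <-> jn x y = y.
Proof.
rewrite /o_le; split => h.
  by rewrite -h joinC // meetC // joinM.
by rewrite -h meetJ.
Qed.
Lemma jn_l x y : le x (jn x y). Proof. exact: meetJ. Qed.
Lemma jn_r x y : le y (jn x y). Proof. rewrite joinC //. exact: meetJ. Qed.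
Lemma jn_lub x y z : le x z -> le y z -> le (jn x y) z.
Proof. move=> /le_jn h1 /le_jn h2. apply/le_jn. by rewrite -joinA // h2 h1. Qed.
Lemma le_tp x : le x tp. Proof. exact: topP. Qed.
Lemma le_bt x : le bt x. Proof. exact: botP. Qed.
Lemma ml1 x : ml x tp = x. Proof. exact: mul1. Qed.
Lemma m1l x : ml tp x = x. Proof. by rewrite mulC // ml1. Qed.
Lemma mul_mono_l x y z : le x y -> le (ml x z) (ml y z).
Proof.
move=> h. apply: resR. apply: le_trans h _. apply: resL. exact: le_refl.
Qed.
Lemma mul_mono_r x y z : le x y -> le (ml z x) (ml z y).
Proof. rewrite !(mulC H z). exact: mul_mono_l. Qed.
Lemma mul_mono x y x' y' : le x x' -> le y y' -> le (ml x y) (ml x' y').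
Proof. move=> h1 h2. apply: le_trans (mul_mono_l _ h1) (mul_mono_r _ h2). Qed.
Lemma mul_le_l x y : le (ml x y) x.
Proof. rewrite -{2}(ml1 x). apply: mul_mono_r. exact: le_tp. Qed.
Lemma mul_le_r x y : le (ml x y) y.
Proof. rewrite mulC //. exact: mul_le_l. Qed.
Lemma mp x y : le (ml x (im x y)) y.
Proof. rewrite mulC //. apply: resR. exact: le_refl. Qed.
Lemma imp_top x y : le x y <-> im x y = tp.
Proof.
split => h.
  apply: le_anti; first exact: le_tp. apply: resL. by rewrite m1l.
have : le tp (im x y) by rewrite h; exact: le_refl.
by move/(resid H); rewrite m1l.
Qed.
Lemma imp_mono_r x y y' : le y y' -> le (im x y) (im x y').
Proof. move=> h. apply: resL. rewrite mulC //. apply: le_trans (mp _ _) h. Qed.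
Lemma imp_anti_l x x' y : le x' x -> le (im x y) (im x' y).
Proof.
move=> h. apply: resL. apply: le_trans (mul_mono_r _ h) _.
rewrite mulC //. exact: mp.
Qed.
Lemma mul0 x : ml bt x = bt.
Proof. apply: le_anti; last exact: le_bt. apply: resR. exact: le_bt. Qed.
Lemma mul0r x : ml x bt = bt.
Proof. by rewrite mulC // mul0. Qed.
Lemma negK x : ng (ng x) = x. Proof. exact: invol. Qed.
Lemma neg_tp : ng tp = bt.
Proof. apply: le_anti; last exact: le_bt. rewrite -(m1l (ng tp)). exact: mp. Qed.
Lemma neg_bt : ng bt = tp.
Proof. apply/imp_top. exact: le_refl. Qed.
Lemma le_ext x y : (forall w, le w x -> le w y) -> le x y.
Proof. move=> h. apply: h. exact: le_refl. Qed.
Lemma curry x y z : im (ml x y) z = im x (im y z).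
Proof.
apply: le_anti; apply: le_ext => w h.
  apply: resL; apply: resL. rewrite -mulA //. exact: resR.
apply: resL. rewrite mulA //. apply: resR; exact: resR.
Qed.
Lemma imp_negmul x y : im x y = ng (ml x (ng y)).
Proof. have h := negK y. rewrite /o_neg in h *. by rewrite curry // h. Qed.
Lemma contra x y : im x y = im (ng y) (ng x).
Proof. by rewrite imp_negmul (imp_negmul (ng y)) negK mulC. Qed.
Lemma neg_anti x y : le x y -> le (ng y) (ng x).
Proof. exact: imp_anti_l. Qed.
Lemma mlAC x y z : ml (ml x y) z = ml (ml x z) y.
Proof. by rewrite -!mulA // (mulC H y). Qed.
Lemma comp x y z : le (ml (im x y) (im y z)) (im x z).
Proof.
apply: resL. rewrite mlAC (mulC H (im x y) x). apply: le_trans (mul_mono_l _ (mp x y)) _.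
exact: mp.
Qed.
Lemma neg_mul_le x : le (ml (ng x) x) bt.
Proof. rewrite mulC //. exact: mp. Qed.

Definition upc (F : A -> Prop) := forall x y, F x -> le x y -> F y.
Definition mulc (F : A -> Prop) := forall x y, F x -> F y -> F (ml x y).
Record filt (F : A -> Prop) : Prop := Filt { f_tp : F tp; f_up : upc F; f_mul : mulc F }.

Section Filter.
Variables (F : A -> Prop) (HF : filt F).
Definition leF x y := F (im x y).
Definition eqF x y := leF x y /\ leF y x.
Lemma le_leF x y : le x y -> leF x y.
Proof. by move/imp_top => h; rewrite /leF h; apply: f_tp. Qed.
Lemma leF_refl x : leF x x. Proof. apply: le_leF; exact: le_refl. Qed.
Lemma leF_trans x y z : leF x y -> leF y z -> leF x z.
Proof. move=> h1 h2. apply: (f_up HF) (comp x y z). exact: (f_mul HF). Qed.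
Lemma F_mp x y : F x -> leF x y -> F y.
Proof. move=> h1 h2. apply: (f_up HF) (mp x y). exact: (f_mul HF). Qed.
Lemma up_leF x y z : le x y -> leF y z -> leF x z.
Proof. move=> h; apply: leF_trans; exact: le_leF. Qed.
Lemma leF_mono (f : A -> A) : (forall x x', le (im x x') (im (f x) (f x'))) ->
  forall x x', leF x x' -> leF (f x) (f x').
Proof. move=> h x x' l. exact: (f_up HF) (h x x'). Qed.
Lemma mul_leF x x' y : leF x x' -> leF (ml x y) (ml x' y).
Proof.
apply: (@leF_mono (fun x => ml x y)) => {}x {}x'. apply: resL.
rewrite mulA //. apply: mul_mono_l. rewrite mulC //. exact: mp.
Qed.
Lemma mul_leF2 x x' y y' : leF x x' -> leF y y' -> leF (ml x y) (ml x' y').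
Proof.
move=> h1 h2. apply: leF_trans (mul_leF _ h1) _. rewrite !(mulC H x'). exact: mul_leF.
Qed.
Lemma imp_leF2 x y y' : leF y y' -> leF (im x y) (im x y').
Proof.
apply: (@leF_mono (fun y => im x y)) => {}y {}y'. apply: resL.
rewrite mulC //. exact: comp.
Qed.
Lemma imp_leF1 x x' y : leF x' x -> leF (im x y) (im x' y).
Proof.
move=> h. apply: (f_up HF) h _. apply: resL. exact: comp.
Qed.
Lemma neg_leF x y : leF x y -> leF (ng y) (ng x).
Proof. exact: imp_leF1. Qed.
Lemma mt_leF x x' y : leF x x' -> leF (mt x y) (mt x' y).
Proof.
apply: (@leF_mono (fun x => mt x y)) => {}x {}x'. apply: resL.
apply: mt_glb.
  apply: le_trans (mul_mono_r _ (mt_l _ _)) _. rewrite mulC //. exact: mp.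
apply: le_trans (mul_le_r _ _) _. exact: mt_r.
Qed.
Lemma jn_leF x x' y : leF x x' -> leF (jn x y) (jn x' y).
Proof.
apply: (@leF_mono (fun x => jn x y)) => {}x {}x'. apply: resL.
rewrite mulC //. apply: resR. apply: jn_lub; apply: resL.
  apply: le_trans (mp _ _) _. exact: jn_l.
apply: le_trans (mul_le_l _ _) _. exact: jn_r.
Qed.
Lemma mt_leF_id x y : leF x y -> leF x (mt x y).
Proof.
move=> h. apply: (f_up HF) h _. apply: resL. apply: mt_glb.
  exact: mul_le_r.
rewrite mulC //. exact: mp.
Qed.
Lemma jn_leF_id x y : leF x y -> leF (jn x y) y.
Proof.
move=> h. apply: (f_up HF) h _. apply: resL. rewrite mulC //. apply: resR.
apply: jn_lub. apply: resL. exact: mp.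
apply: resL. exact: mul_le_l.
Qed.

Definition prime := forall x y, leF x y \/ leF y x.
Hypothesis HP : prime.
Lemma prime_jn u w : F (jn u w) -> F u \/ F w.
Proof.
move=> h. case: (HP u w) => l.
  right. apply: F_mp h _. exact: jn_leF_id.
left. rewrite joinC // in h. apply: F_mp h _. exact: jn_leF_id.
Qed.
Lemma mul_eqF x y : ~ leF x (ng y) -> leF (mt x y) (ml x y).
Proof.
move=> nl. have e := nmax H x y.
have : F (jn (ng (ml x y)) (im (mt x y) (ml x y))) by rewrite e; apply: (f_tp HF).
case/prime_jn => // h. exfalso; apply: nl. by rewrite /leF /o_neg -curry.
Qed.
Lemma mul_le_mt x y : le (ml x y) (mt x y).
Proof. apply: mt_glb. exact: mul_le_l. exact: mul_le_r. Qed.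
Lemma mul_leF0 x y : leF x (ng y) -> leF (ml x y) bt.
Proof.
move=> h. apply: leF_trans (mul_leF _ h) _. apply: le_leF. exact: neg_mul_le.
Qed.
Lemma sq_lemma y : leF y (ng y) -> leF tp (o_sq o (ng (o_sq o y))).
Proof.
move=> h. have h1 : leF (ml y y) bt by apply: mul_leF0.
have h2 := neg_leF h1. rewrite neg_bt in h2.
have := mul_leF2 h2 h2. by rewrite m1l.
Qed.
Hypothesis HM : forall x, o_biimp o (ng (o_sq o (ng (o_sq o x))))
                    (o_sq o (ng (o_sq o (ng x)))) = tp.
Hypothesis Hprop : ~ F bt.
Lemma no_fix x : ~ (leF x (ng x) /\ leF (ng x) x).
Proof.
case=> h1 h2.
have hv : leF tp (o_sq o (ng (o_sq o (ng x)))).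
  apply: sq_lemma. by rewrite negK.
have hu := neg_leF (sq_lemma h1). rewrite neg_tp in hu.
have h3 := leF_trans (imp_leF1 _ hv) (imp_leF2 _ hu).
have h4 := mul_leF2 (leF_refl (im (ng (o_sq o (ng (o_sq o x)))) (o_sq o (ng (o_sq o (ng x)))))) h3.
have : F (o_biimp o (ng (o_sq o (ng (o_sq o x)))) (o_sq o (ng (o_sq o (ng x))))).
  rewrite HM. exact: (f_tp HF).
move=> hb. apply: Hprop. apply: F_mp hb _. rewrite /o_biimp.
apply: leF_trans h4 _. apply: le_leF. rewrite -/(ng tp) neg_tp mul0r. exact: le_refl.
Qed.
End Filter.

Fixpoint pw (p : A) k := match k with 0 => tp | k'.+1 => ml p (pw p k') end.
Lemma pw_add p k l : pw p (k + l) = ml (pw p k) (pw p l).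
Proof. elim: k => [|k IH] /=; first by rewrite m1l. by rewrite IH mulA. Qed.
Lemma pw_le p k l : le (pw p (k + l)) (pw p k).
Proof. rewrite pw_add. exact: mul_le_l. Qed.
Lemma mlACA a b c d : ml (ml a b) (ml c d) = ml (ml a c) (ml b d).
Proof. by rewrite -!mulA // (mulA H b) (mulC H b c) -mulA. Qed.
Lemma jn_tp u : jn u tp = tp. Proof. apply/le_jn. exact: le_tp. Qed.
Lemma jn_mul u w w' : jn u w = tp -> jn u w' = tp -> jn u (ml w w') = tp.
Proof.
move=> h1 h2. apply: le_anti; first exact: le_tp.
have : le (ml (jn u w) (jn u w')) (jn u (ml w w')).
  apply: resR. apply: jn_lub; apply: resL.
    apply: le_trans (mul_le_l _ _) _. exact: jn_l.
  rewrite mulC //. apply: resR. apply: jn_lub; apply: resL.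
    apply: le_trans (mul_le_l _ _) _. exact: jn_l.
  rewrite mulC //. exact: jn_r.
by rewrite h1 h2 m1l.
Qed.
Lemma pw_prelin p q : jn p q = tp -> forall k l, jn (pw p k) (pw q l) = tp.
Proof.
move=> h.
have h1 : forall l, jn p (pw q l) = tp.
  elim=> [|l IH] /=; first exact: jn_tp. exact: jn_mul.
elim=> [|k IH] l /=; first by rewrite joinC // jn_tp.
rewrite joinC //. apply: jn_mul; by rewrite joinC.
Qed.

Lemma exists_prime c : c <> tp -> exists F, filt F /\ prime F /\ ~ F c.
Proof.
move=> nc.
have hch : forall Fs : classical_sets.set (classical_sets.set A),
  classical_sets.subset Fs (fun S => upc S /\ mulc S /\ ~ S c) ->
  classical_sets.total_on Fs classical_sets.subset ->
  (fun S => upc S /\ mulc S /\ ~ S c) (classical_sets.bigcup Fs (fun X => X)).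
move=> Fs sub tot. split; [|split].
- move=> x y [X FX Xx] l. exists X => //. exact: (sub X FX).1 _ _ Xx l.
- move=> x y [X FX Xx] [Y FY Yy].
  case: (tot X Y FX FY) => s.
    exists Y => //. apply: (sub Y FY).2.1 => //. exact: s.
  exists X => //. apply: (sub X FX).2.1 => //. exact: s.
- move=> [X FX Xc]. exact: (sub X FX).2.2 Xc.
have [M [[upM [mulM ncM]] maxM]] :=
  @classical_sets.Zorn_bigcup A (fun S => upc S /\ mulc S /\ ~ S c) hch.
  have Mt : M tp.
    apply: NNPP => nMt.
    apply: (maxM (fun x => M x \/ x = tp)).
      split; first by move=> x hx; left.
      by move=> /(_ tp (or_intror erefl)).
    split; [|split].
    - move=> x y [hx|->] l; first by left; exact: upM hx l.
      by right; apply: le_anti => //; exact: le_tp.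
    - move=> x y [hx|->] [hy|->].
      + left; exact: mulM.
      + by left; rewrite ml1.
      + by left; rewrite m1l.
      + by right; rewrite ml1.
    - by case.
  have FM : filt M by split.
  have key : forall p, ~ M p -> exists f k, M f /\ le (ml f (pw p k)) c.
    move=> p nMp. apply: NNPP => hn.
    pose G z := exists f k, M f /\ le (ml f (pw p k)) z.
    apply: (maxM G).
      split.
        move=> x Mx; exists x, 0; split => //=; rewrite ml1; exact: le_refl.
      move=> /(_ p) h; apply: nMp; apply: h. exists tp, 1; split => //=.
      rewrite m1l ml1; exact: le_refl.
    split; [|split].
    - move=> x y [f [k [Mf l]]] l2. exists f, k; split => //; exact: le_trans l2.
    - move=> x y [f [k [Mf l]]] [f' [k' [Mf' l']]]. exists (ml f f'), (k + k').
      split; first exact: mulM. rewrite pw_add mlACA. exact: mul_mono.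
    - move=> [f [k [Mf l]]]. apply: hn. by exists f, k.
  exists M; split => //; split => // x y.
  apply: NNPP => /not_or_and [n1 n2].
  have [f1 [k1 [M1 l1]]] := key _ n1.
  have [f2 [k2 [M2 l2]]] := key _ n2.
  apply: ncM. apply: upM (mulM _ _ M1 M2) _.
  have e := pw_prelin (prelin H x y) (k1 + k2) (k1 + k2).
  rewrite -[ml f1 f2]ml1 -e mulC //. apply: resR. apply: jn_lub; apply: resL; rewrite mulC //.
    apply: le_trans l1. apply: mul_mono; first exact: mul_le_l. exact: pw_le.
  apply: le_trans l2. apply: mul_mono; first exact: mul_le_r. rewrite addnC. exact: pw_le.
Qed.
End NMT.


Definition nmul (T a b : nat) := if a + b <= T then 0 else minn a b.
Definition nneg (T a : nat) := T - a.
Definition nimp (T a b : nat) := nneg T (nmul T a (nneg T b)).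

Lemma count_mono (X : Type) (a b : pred X) s :
  (forall z, a z -> b z) -> count a s <= count b s.
Proof.
move=> h; elim: s => //= z s IH. case E: (a z); case E': (b z) => /=; try lia.
by rewrite (h _ E) in E'.
Qed.
Lemma count_lt (X : Type) (a b : pred X) s :
  (forall z, a z -> b z) -> (exists z, List.In z s /\ b z /\ ~~ a z) ->
  count a s < count b s.
Proof.
move=> h; elim: s => [[z [[]]]|z s IH] /= [y [[<-|hy] [h1 h2]]].
  rewrite h1 (negbTE h2) /=. have := count_mono s h. lia.
have := IH (ex_intro _ y (conj hy (conj h1 h2))).
case E: (a z); case E': (b z) => /=; try lia. by rewrite (h _ E) in E'.
Qed.

Lemma In_mem (T : eqType) (x : T) (s : seq T) : x \in s -> List.In x s.
Proof. elim: s => //= y s IH; rewrite inE => /orP [/eqP ->|h]; [by left|right; exact: IH]. Qed.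

Definition Tn n := (((n.*2).+2).*2).+1.

Section Chain.
Variables (A : Type) (o : nm_ops A) (H : is_NM o).
Local Notation mt := (o_meet o).
Local Notation jn := (o_join o).
Local Notation ml := (o_mul o).
Local Notation im := (o_imp o).
Local Notation bt := (o_bot o).
Local Notation tp := (o_top o).
Local Notation le := (o_le o).
Local Notation ng := (o_neg o).
Hypothesis HM : forall x, o_biimp o (ng (o_sq o (ng (o_sq o x))))
                    (o_sq o (ng (o_sq o (ng x)))) = tp.
Variables (F : A -> Prop) (HF : filt o F) (HP : prime o F) (Hprop : ~ F bt).
Variables (n : nat) (v : 'I_n -> A).
Local Notation leF := (leF o F).
Local Notation eqF := (eqF o F).
Let trF x y z : leF x y -> leF y z -> leF x z := @leF_trans A o H F HF x y z.
Let reflF x : leF x x := @leF_refl A o H F HF x.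
Let negF x y : leF x y -> leF (ng y) (ng x) := @neg_leF A o H F HF x y.
Let leleF x y : le x y -> leF x y := @le_leF A o H F HF x y.

Definition leb x y : bool := if excluded_middle_informative (leF x y) then true else false.
Lemma lebP x y : leb x y <-> leF x y.
Proof. rewrite /leb; case: excluded_middle_informative => //. Qed.
Lemma leb_iff a b c d : (leF a b <-> leF c d) -> leb a b = leb c d.
Proof.
move=> h. rewrite /leb; case: excluded_middle_informative => h1; case: excluded_middle_informative => h2 //; exfalso; tauto.
Qed.

Definition L : seq A := bt :: tp :: [seq v i | i <- enum 'I_n] ++ [seq ng (v i) | i <- enum 'I_n].
Definition Mx := size L.
Lemma MxE : Mx = (n.*2).+2.
Proof. rewrite /Mx /L (size_cat [:: _; _]) size_cat !size_map -enumT size_enum_ord addnn. by []. Qed.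
Definition lo x := count (fun y => ~~ leb x y) L.
Definition m x := lo x + (Mx - lo (ng x)).
Definition TT := Tn n.
Lemma TTE : TT = (Mx.*2).+1. Proof. by rewrite MxE. Qed.
Definition gv x := if leb x bt then 0 else if leb tp x then TT
                   else if m x < Mx then (m x).+1 else m x.
Definition X x := exists2 y, List.In y L & eqF x y.

Lemma lo_le x : lo x <= Mx. Proof. exact: count_size. Qed.

Lemma eqF_refl x : eqF x x. Proof. split; exact: reflF. Qed.
Lemma eqF_sym x y : eqF x y -> eqF y x. Proof. by case. Qed.
Lemma eqF_trans x y z : eqF x y -> eqF y z -> eqF x z.
Proof. move=> [h1 h2] [h3 h4]; split; exact: trF h1 h3 || exact: trF h4 h2. Qed.
Lemma total x y : ~ leF x y -> leF y x.
Proof. by case: (HP x y). Qed.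

Lemma lo_eq x y : eqF x y -> lo x = lo y.
Proof.
move=> [h1 h2]. apply: eq_count => z. congr negb. apply: leb_iff.
split => h; [exact: trF h2 h | exact: trF h1 h].
Qed.
Lemma neg_eqF x y : eqF x y -> eqF (ng x) (ng y).
Proof. move=> [h1 h2]; split; exact: negF. Qed.
Lemma gv_eq x y : eqF x y -> gv x = gv y.
Proof.
move=> e. have [h1 h2] := e.
have e1 : leb x bt = leb y bt.
  apply: leb_iff; split => h; [exact: trF h2 h | exact: trF h1 h].
have e2 : leb tp x = leb tp y.
  apply: leb_iff; split => h; [exact: trF h h1 | exact: trF h h2].
by rewrite /gv /m e1 e2 (lo_eq e) (lo_eq (neg_eqF e)).
Qed.
Lemma X_eq x y : eqF x y -> X y -> X x.
Proof. move=> e [z hz e']. exists z => //. exact: eqF_trans e e'. Qed.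
Lemma X_bt : X bt. Proof. exists bt; [by left | exact: eqF_refl]. Qed.
Lemma X_tp : X tp. Proof. exists tp; [by right; left | exact: eqF_refl]. Qed.
Lemma X_v i : X (v i).
Proof.
exists (v i); last exact: eqF_refl. right; right. apply/List.in_or_app; left.
apply: List.in_map. apply: In_mem. first [by rewrite mem_enum | by rewrite -enumT mem_enum | by rewrite enumT mem_enum].
Qed.
Lemma X_nv i : X (ng (v i)).
Proof.
exists (ng (v i)); last exact: eqF_refl. right; right. apply/List.in_or_app; right.
apply: (List.in_map (fun i => ng (v i))).
apply: In_mem. first [by rewrite mem_enum | by rewrite -enumT mem_enum | by rewrite enumT mem_enum].
Qed.
Lemma X_neg x : X x -> X (ng x).
Proof.
move=> [y hy e]. apply: X_eq (neg_eqF e) _.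
case: hy => [<-|[<-|]]; first by rewrite (neg_bt H) //; exact: X_tp.
  by rewrite (neg_tp H) //; exact: X_bt.
move=> hh. case: (List.in_app_or _ _ _ hh) => /List.in_map_iff [i [<- _]].
  exact: X_nv.
rewrite (negK H) //. exact: X_v.
Qed.

Lemma lo_lt x y : X y -> ~ leF x y -> lo y < lo x.
Proof.
move=> [r hr [e1 e2]] nl. apply: count_lt.
  move=> z /negP nz; apply/negP => /lebP h. apply: nz; apply/lebP.
  exact: trF (total nl) h.
exists r; split => //; split.
  apply/negP => /lebP h. apply: nl. exact: trF h e2.
by rewrite negbK; apply/lebP.
Qed.
Lemma lo_neg_le x y : leF y x -> lo (ng x) <= lo (ng y).
Proof.
move=> l. apply: count_mono => z /negP nz; apply/negP => /lebP h. apply: nz; apply/lebP.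
exact: trF (negF l) h.
Qed.
Lemma m_lt x y : X y -> ~ leF x y -> m y < m x.
Proof.
move=> hy nl. have h1 := lo_lt hy nl. have h2 := lo_neg_le (total nl).
have := lo_le (ng x). have := lo_le (ng y). rewrite /m. lia.
Qed.
Lemma m_neg x : m (ng x) = Mx.*2 - m x.
Proof.
rewrite /m (negK H) //. have := lo_le x. have := lo_le (ng x). lia.
Qed.
Lemma m_ne x : X x -> m x <> Mx.
Proof.
move=> hx e.
have e' : m (ng x) = Mx by rewrite m_neg e; lia.
have hnx := X_neg hx.
case: (classic (leF x (ng x))) => h1; last first.
  have := m_lt hnx h1. lia.
case: (classic (leF (ng x) x)) => h2; last first.
  have := m_lt hx h2. lia.
exact: (no_fix H HF HM Hprop (conj h1 h2)).
Qed.
Lemma m_le x : m x <= Mx.*2.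
Proof. have := lo_le x. rewrite /m. lia. Qed.
Lemma Mx_ge2 : 2 <= Mx. Proof. rewrite MxE. lia. Qed.

Lemma gv_lt x y : X x -> X y -> ~ leF x y -> gv y < gv x.
Proof.
move=> hx hy nl. rewrite /gv.
case: (boolP (leb x bt)) => [/lebP h|hxb].
  exfalso; apply: nl. apply: trF h _. apply: leleF. exact: le_bt.
case: (boolP (leb tp y)) => [/lebP h|hty].
  exfalso; apply: nl. apply: trF _ h. apply: leleF. exact: le_tp.
case: (boolP (leb y bt)) => hyb.
  have := Mx_ge2. rewrite TTE. case: ifP => _; first lia. case: ifP; lia.
case: (boolP (leb tp x)) => htx.
  have := m_le y. rewrite TTE. case: ifP; lia.
have := m_lt hy nl. have := m_ne hx. have := m_ne hy. case: ifP; case: ifP; lia.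
Qed.
Lemma gv_le x y : X x -> X y -> leF x y -> gv x <= gv y.
Proof.
move=> hx hy l. case: (classic (leF y x)) => h.
  by rewrite (gv_eq (conj l h)).
have := gv_lt hy hx h. lia.
Qed.
Lemma not_tp_bt : ~ leF tp bt.
Proof. rewrite /leF. have := neg_tp H. rewrite /o_neg => ->. exact: Hprop. Qed.
Lemma gv_bt : gv bt = 0.
Proof. rewrite /gv. have := reflF bt. by move/lebP => ->. Qed.
Lemma gv_tp : gv tp = TT.
Proof.
rewrite /gv. case: (boolP (leb tp bt)) => [/lebP /not_tp_bt //|_].
have := reflF tp. by move/lebP => ->.
Qed.
Lemma gv_T x : gv x <= TT.
Proof. rewrite /gv TTE. have := m_le x. case: ifP => _; first lia. case: ifP => _ //. case: ifP; lia. Qed.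
Lemma gv_neg x : X x -> gv (ng x) = TT - gv x.
Proof.
move=> hx. have hT := gv_T x.
case: (boolP (leb x bt)) => [/lebP h|hxb].
  have h1 : leF tp (ng x) by have := negF h; rewrite (neg_bt H).
  rewrite {2}/gv. have := h; move/lebP => ->. rewrite subn0 /gv.
  case: (boolP (leb (ng x) bt)) => [/lebP h2|_]; first by case: not_tp_bt; exact: trF h1 h2.
  by have := h1; move/lebP => ->.
case: (boolP (leb tp x)) => [/lebP h|htx].
  have h1 : leF (ng x) bt by have := negF h; rewrite (neg_tp H).
  rewrite {2}/gv (negbTE hxb). have := h; move/lebP => ->. rewrite subnn /gv.
  by have := h1; move/lebP => ->.
have nb : ~~ leb (ng x) bt.
  apply/negP => /lebP h; move/negP: htx; apply; apply/lebP.
  have := negF h. by rewrite (neg_bt H) (negK H).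
have nt : ~~ leb tp (ng x).
  apply/negP => /lebP h; move/negP: hxb; apply; apply/lebP.
  have := negF h. by rewrite (neg_tp H) (negK H).
rewrite /gv (negbTE hxb) (negbTE htx) (negbTE nb) (negbTE nt) m_neg TTE.
have := m_ne hx. have := m_le x. case: ifP; case: ifP; lia.
Qed.
Lemma gv_mt x y : X x -> X y -> X (mt x y) /\ gv (mt x y) = minn (gv x) (gv y).
Proof.
move=> hx hy. case: (classic (leF x y)) => l.
  have e : eqF (mt x y) x := conj (leleF (mt_l H x y)) (mt_leF_id H HF l).
  split; first exact: X_eq e hx. rewrite (gv_eq e). have := gv_le hx hy l. lia.
have l' := total l.
have e : eqF (mt x y) y.
  rewrite meetC //. exact: conj (leleF (mt_l H y x)) (mt_leF_id H HF l').
split; first exact: X_eq e hy. rewrite (gv_eq e). have := gv_lt hx hy l. lia.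
Qed.
Lemma gv_jn x y : X x -> X y -> X (jn x y) /\ gv (jn x y) = maxn (gv x) (gv y).
Proof.
move=> hx hy. case: (classic (leF x y)) => l.
  have e : eqF (jn x y) y := conj (jn_leF_id H HF l) (leleF (jn_r H x y)).
  split; first exact: X_eq e hy. rewrite (gv_eq e). have := gv_le hx hy l. lia.
have l' := total l.
have e : eqF (jn x y) x.
  rewrite joinC //. exact: conj (jn_leF_id H HF l') (leleF (jn_r H y x)).
split; first exact: X_eq e hx. rewrite (gv_eq e). have := gv_lt hx hy l. lia.
Qed.
Lemma gv_ml x y : X x -> X y -> X (ml x y) /\ gv (ml x y) = nmul TT (gv x) (gv y).
Proof.
move=> hx hy. have hT := gv_T y. case: (classic (leF x (ng y))) => l.
  have e : eqF (ml x y) bt := conj (mul_leF0 H HF l) (leleF (le_bt H _)).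
  split; first exact: X_eq e X_bt. rewrite (gv_eq e) gv_bt.
  have := gv_le hx (X_neg hy) l. rewrite (gv_neg hy) /nmul. case: ifP; lia.
have e : eqF (ml x y) (mt x y) := conj (leleF (mul_le_mt H x y)) (mul_eqF H HF HP l).
have [Xm gm] := gv_mt hx hy.
split; first exact: X_eq e Xm. rewrite (gv_eq e) gm.
have := gv_lt hx (X_neg hy) l. rewrite (gv_neg hy) /nmul. case: ifP; lia.
Qed.
Lemma gv_im x y : X x -> X y -> X (im x y) /\ gv (im x y) = nimp TT (gv x) (gv y).
Proof.
move=> hx hy. rewrite (imp_negmul H). have [X1 g1] := gv_ml hx (X_neg hy).
split; first exact: X_neg X1. by rewrite (gv_neg X1) g1 (gv_neg hy).
Qed.
End Chain.


Ltac split_ifs :=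
  repeat match goal with
  | |- context [if ?c then _ else _] =>
      lazymatch c with context [if _ then _ else _] => fail | _ => case: (boolP c) => ? end
  end.

Section ChainAlg.
Variable T : nat.
Definition cmeet (x y : 'I_T.+1) : 'I_T.+1 := inord (minn x y).
Definition cjoin (x y : 'I_T.+1) : 'I_T.+1 := inord (maxn x y).
Definition cmul (x y : 'I_T.+1) : 'I_T.+1 := inord (nmul T x y).
Definition cimp (x y : 'I_T.+1) : 'I_T.+1 := inord (nimp T x y).
Definition cops : nm_ops 'I_T.+1 := NMOps cmeet cjoin cmul cimp (inord 0) (inord T).

Lemma v_meet x y : nat_of_ord (cmeet x y) = minn x y.
Proof. rewrite /cmeet inordK //. have := ltn_ord x. lia. Qed.
Lemma v_join x y : nat_of_ord (cjoin x y) = maxn x y.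
Proof. rewrite /cjoin inordK //. have := ltn_ord x. have := ltn_ord y. lia. Qed.
Lemma v_mul x y : nat_of_ord (cmul x y) = nmul T x y.
Proof. rewrite /cmul inordK // /nmul. have := ltn_ord x. case: ifP; lia. Qed.
Lemma v_imp x y : nat_of_ord (cimp x y) = nimp T x y.
Proof. rewrite /cimp inordK // /nimp /nneg. lia. Qed.
Lemma v_bot : nat_of_ord (inord 0 : 'I_T.+1) = 0. Proof. by rewrite inordK. Qed.
Lemma v_top : nat_of_ord (inord T : 'I_T.+1) = T. Proof. by rewrite inordK. Qed.
Lemma leC (x y : 'I_T.+1) : o_le cops x y <-> x <= y.
Proof.
rewrite /o_le /=; split => h.
  have := f_equal (@nat_of_ord _) h. rewrite v_meet. lia.
apply: val_inj. rewrite /= v_meet. lia.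
Qed.
End ChainAlg.

Ltac cval := repeat (first [rewrite v_meet | rewrite v_join | rewrite v_mul | rewrite v_imp | rewrite v_bot | rewrite v_top]); rewrite /nimp /nmul /nneg.
Ltac bnd := repeat match goal with x : 'I__ |- _ => move: (ltn_ord x); move: x => x end.
Ltac cr := move=> *; apply: val_inj => /=; cval; split_ifs; lia.

Ltac cval2 := repeat (first [rewrite v_meet | rewrite v_join | rewrite v_mul | rewrite v_imp | rewrite v_bot | rewrite v_top]).
Section NMm.
Variable k : nat.
Local Notation T := (k.*2).+1.
Lemma nA a : a.*2 <= T -> nmul T a a = 0.
Proof. rewrite /nmul => h. case: ifP => //; lia. Qed.
Lemma nB a : T < a.*2 -> nmul T a a = a.
Proof. rewrite /nmul => h. case: ifP => ?; lia. Qed.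
Lemma nC a : a <= T -> nimp T a 0 = T - a.
Proof. rewrite /nimp /nmul /nneg => h. case: ifP => ?; lia. Qed.
Lemma nD : nmul T T T = T.
Proof. rewrite /nmul. case: ifP => ?; lia. Qed.
Lemma nE : nimp T 0 0 = T.
Proof. rewrite nC //; lia. Qed.
Lemma nF : nimp T T T = T.
Proof. rewrite /nimp /nmul /nneg. case: ifP => ?; lia. Qed.
Lemma nm_nat a : a <= T ->
  nmul T (nimp T (nimp T (nmul T (nimp T (nmul T a a) 0) (nimp T (nmul T a a) 0)) 0)
           (nmul T (nimp T (nmul T (nimp T a 0) (nimp T a 0)) 0)
                   (nimp T (nmul T (nimp T a 0) (nimp T a 0)) 0)))
         (nimp T (nmul T (nimp T (nmul T (nimp T a 0) (nimp T a 0)) 0)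
                   (nimp T (nmul T (nimp T a 0) (nimp T a 0)) 0))
                 (nimp T (nmul T (nimp T (nmul T a a) 0) (nimp T (nmul T a a) 0)) 0)) = T.
Proof.
move=> ha. rewrite (nC ha).
case: (leqP a.*2 T) => h.
  have h1 : T < (T - a).*2 by lia.
  have h2 : T - a <= T by lia.
  have h3 : T - (T - a) = a by lia.
  rewrite (nA h) nE nD (nC (leqnn T)) subnn (nB h1) (nC h2) h3 (nA h) nE nD //.
have h1 : (T - a).*2 <= T by lia.
rewrite (nB h) (nC ha) (nA h1) nE nD. by rewrite nF nD.
Qed.
End NMm.

Lemma cops_NM k : is_NMm (cops (k.*2).+1).
Proof.
have bt T (x : 'I_T.+1) : x < T.+1 := ltn_ord x.
split; first split.
all: rewrite /o_le /o_neg /o_biimp /o_sq /=.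
- move=> x y; have := bt _ x; have := bt _ y; cr.
- move=> x y; have := bt _ x; have := bt _ y; cr.
- move=> x y z; have := bt _ x; have := bt _ y; have := bt _ z; cr.
- move=> x y z; have := bt _ x; have := bt _ y; have := bt _ z; cr.
- move=> x y; have := bt _ x; have := bt _ y; cr.
- move=> x y; have := bt _ x; have := bt _ y; cr.
- move=> x; have := bt _ x; cr.
- move=> x; have := bt _ x; cr.
- move=> x y; have := bt _ x; have := bt _ y; cr.
- move=> x y z; have := bt _ x; have := bt _ y; have := bt _ z; cr.
- move=> x; have := bt _ x; cr.
- move=> x y z; have := bt _ x; have := bt _ y; have := bt _ z.
  split => h; have := f_equal (@nat_of_ord _) h; cval => /= h'; apply: val_inj => /=; move: h'; cval;
  split_ifs; lia.
- move=> x y; have := bt _ x; have := bt _ y; cr.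
- move=> x y; have := bt _ x; have := bt _ y; cr.
- move=> x; have := bt _ x; cr.
- move=> x; have := bt _ x => h. apply: val_inj => /=. cval2. exact: nm_nat.
Qed.

Section Hom.
Variables (A : Type) (o : nm_ops A) (H : is_NM o).
Hypothesis HM : forall x, o_biimp o (o_neg o (o_sq o (o_neg o (o_sq o x))))
                    (o_sq o (o_neg o (o_sq o (o_neg o x)))) = o_top o.
Variables (F : A -> Prop) (HF : filt o F) (HP : prime o F) (Hprop : ~ F (o_bot o)).
Variables (n : nat) (v : 'I_n -> A).

Lemma hom t : X o F v (eval o v t) /\
  gv o F v (eval o v t) = eval (cops (Tn n)) (fun i => inord (gv o F v (v i))) t.
Proof.
elim: t => [i|||a [Xa ga] b [Xb gb]|a [Xa ga] b [Xb gb]|a [Xa ga] b [Xb gb]|a [Xa ga] b [Xb gb]] /=.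
- split; first exact: X_v. rewrite inordK //. have := gv_T o F v (v i). rewrite /TT. lia.
- split; first exact: X_bt. by rewrite gv_bt // v_bot.
- split; first exact: X_tp. by rewrite gv_tp // v_top.
- have [h1 h2] := gv_mt H HM HF HP Hprop Xa Xb. split => //. by rewrite h2 v_meet ga gb.
- have [h1 h2] := gv_jn H HM HF HP Hprop Xa Xb. split => //. by rewrite h2 v_join ga gb.
- have [h1 h2] := gv_ml H HM HF HP Hprop Xa Xb. split => //. by rewrite h2 v_mul ga gb.
- have [h1 h2] := gv_im H HM HF HP Hprop Xa Xb. split => //. by rewrite h2 v_imp ga gb.
Qed.
End Hom.

Lemma separate A (o : nm_ops A) (HN : is_NMm o) n (v : 'I_n -> A) a b :
  eval o v a <> eval o v b ->
  exists w : 'I_n -> 'I_(Tn n).+1, eval (cops (Tn n)) w a <> eval (cops (Tn n)) w b.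
Proof.
case: HN => H HM.
suff key : forall a b, ~ o_le o (eval o v a) (eval o v b) ->
  exists w : 'I_n -> 'I_(Tn n).+1, eval (cops (Tn n)) w a <> eval (cops (Tn n)) w b.
  move=> ne. case: (classic (o_le o (eval o v a) (eval o v b))) => l1.
    case: (classic (o_le o (eval o v b) (eval o v a))) => l2.
      by case: ne; exact: (le_anti H l1 l2).
    have [w hw] := key _ _ l2. exists w => e. exact: hw (esym e).
  exact: key.
move=> {}a {}b nl.
have nc : o_imp o (eval o v a) (eval o v b) <> o_top o.
  by move/(imp_top H).
have [F [HF [HP nF]]] := exists_prime H nc.
have Hprop : ~ F (o_bot o).
  move=> hb; apply: nF. apply: (f_up HF) hb _. exact: le_bt.
have [Xa ga] := hom H HM HF HP Hprop v a.
have [Xb gb] := hom H HM HF HP Hprop v b.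
have hlt := gv_lt H HM HF HP Hprop Xa Xb nF.
exists (fun i => inord (gv o F v (v i))) => e.
have : gv o F v (eval o v a) = gv o F v (eval o v b) by rewrite ga gb e.
lia.
Qed.


Lemma bool_NM : is_NMm bool_ops.
Proof.
split; first split.
all: rewrite /o_le /o_neg /o_biimp /o_sq /=.
all: try by repeat case.
Qed.

Lemma eval_ext A (o : nm_ops A) n (v v' : 'I_n -> A) t :
  (forall i, v i = v' i) -> eval o v t = eval o v' t.
Proof. move=> h; elim: t => /= [i|||a ha b hb|a ha b hb|a ha b hb|a ha b hb]; by rewrite ?h ?ha ?hb. Qed.

Section Main.
Variable n : nat.
Local Notation T := (Tn n).
Local Notation C := 'I_T.+1.
Local Notation Co := (cops T).
Definition HC : is_NMm Co := cops_NM ((n.*2).+2).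

Definition sem (phi : form n) : {ffun {ffun 'I_n -> C} -> C} := [ffun w : {ffun 'I_n -> C} => eval Co w phi].

Lemma equiv_sem a b : nm_equiv a b <-> sem a = sem b.
Proof.
split => h.
  apply/ffunP => w; rewrite !ffunE. exact: h _ _ HC w.
move=> A o HN v. apply: NNPP => ne. have [w hw] := separate HN ne. apply: hw.
move/ffunP: h => /(_ (finfun w)). rewrite !ffunE.
by rewrite !(@eval_ext _ Co _ (finfun w) w) // => i; rewrite ffunE.
Qed.

Lemma equiv_sym (a b : form n) : nm_equiv a b -> nm_equiv b a.
Proof. move=> h A o HN v. by rewrite (h A o HN v). Qed.

Definition cnt (phi : form n) := #|[set mu : {ffun 'I_n -> bool} | eval bool_ops mu phi]|.

Lemma cnt_equiv a b : nm_equiv a b -> cnt a = cnt b.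
Proof. move=> h. apply: eq_card => mu. by rewrite !inE (h _ _ bool_NM mu). Qed.
Lemma cnt_val a b : cnt a + cnt b = cnt (FOr a b) + cnt (FAnd a b).
Proof.
rewrite /cnt.
have e1 : [set mu : {ffun 'I_n -> bool} | eval bool_ops mu (FOr a b)] =
  [set mu : {ffun 'I_n -> bool} | eval bool_ops mu a] :|: [set mu : {ffun 'I_n -> bool} | eval bool_ops mu b].
  by apply/setP => mu; rewrite !inE.
have e2 : [set mu : {ffun 'I_n -> bool} | eval bool_ops mu (FAnd a b)] =
  [set mu : {ffun 'I_n -> bool} | eval bool_ops mu a] :&: [set mu : {ffun 'I_n -> bool} | eval bool_ops mu b].
  by apply/setP => mu; rewrite !inE.
by rewrite e1 e2 cardsUI.
Qed.
Lemma cnt_bot : cnt FBot = 0.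
Proof. apply: eq_card0 => mu. by rewrite inE. Qed.

Lemma Tpos : 0 < T. Proof. by rewrite /Tn. Qed.

Definition bw (mu : 'I_n -> bool) : 'I_n -> C := fun i => if mu i then inord T else inord 0.
Lemma eval_bool mu t : eval Co (bw mu) t = if eval bool_ops mu t then inord T else inord 0.
Proof.
have hT := Tpos.
elim: t => //= [a ha b hb|a ha b hb|a ha b hb|a ha b hb]; rewrite ha hb;
 case: (eval bool_ops mu a); case: (eval bool_ops mu b); apply: val_inj => /=; cval; split_ifs; lia.
Qed.

Definition rd (x : C) : C := if T < x.*2 then inord T else inord 0.
Lemma eval_rd (w : 'I_n -> C) (t : form n) : eval Co (fun i => rd (w i)) t = rd (eval Co w t).
Proof.
have hT := Tpos.
elim: t => /= [i|||a ha b hb|a ha b hb|a ha b hb|a ha b hb]; rewrite ?ha ?hb //;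
  rewrite /rd; apply: val_inj => /=; rewrite ?fun_if; cval;
  try (move: (ltn_ord (eval Co w a)) (ltn_ord (eval Co w b)));
  rewrite /Tn; split_ifs; cval; split_ifs; lia.
Qed.

Lemma ji_le1 (g : form n) : join_irred g -> cnt g <= 1.
Proof.
move=> [_ hj]. apply/card_le1_eqP => mu1 mu2; rewrite !inE => h1 h2.
apply: NNPP => ne.
have [i hi] : exists i, mu1 i <> mu2 i.
  apply: NNPP => h. apply: ne. apply/ffunP => i. apply: NNPP => hi. apply: h.
  exists i => e. apply: hi. by rewrite e.
pose p := FImp (FVar i) (FImp (FVar i) FBot).
pose q := FImp (FImp (FVar i) FBot) (FVar i).
have e : nm_equiv g (FOr (FAnd g p) (FAnd g q)).
  apply/equiv_sem/ffunP => w. rewrite !ffunE /=.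
  move: (eval Co w g) (w i) => x y. have := ltn_ord x; have := ltn_ord y.
  rewrite /Tn => hy1 hx1; apply: val_inj => /=. cval. rewrite /Tn. split_ifs; cval; split_ifs; lia.
have tr : forall mu : {ffun 'I_n -> bool}, eval bool_ops mu g -> mu i -> ~ nm_equiv g (FAnd g p).
  move=> mu hg hm e'. have := e' _ _ bool_NM mu. by rewrite /= hg hm.
have fa : forall mu : {ffun 'I_n -> bool}, eval bool_ops mu g -> ~~ mu i -> ~ nm_equiv g (FAnd g q).
  move=> mu hg hm e'. have := e' _ _ bool_NM mu. by rewrite /= hg (negbTE hm).
case: (hj _ _ e) => h.
  case E : (mu1 i).
    exact: tr mu1 h1 E h.
  have E2 : mu2 i by move: hi; rewrite E; case: (mu2 i).
  exact: tr mu2 h2 E2 h.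
case E : (mu1 i).
  have E2 : ~~ mu2 i by move: hi; rewrite E; case: (mu2 i).
  exact: fa mu2 h2 E2 h.
exact: fa mu1 h1 (negbT E) h.
Qed.

Lemma ji_idem (g : form n) : join_irred g -> Defs.idempotent g -> cnt g = 1.
Proof.
move=> hj hid. have := ji_le1 hj. suff : 0 < cnt g by lia.
have [nb _] := hj.
have ne : sem g <> sem FBot by move/equiv_sem.
have [w hw] : exists w, sem g w <> sem FBot w.
  apply: NNPP => h; apply: ne; apply/ffunP => w; apply: NNPP => h'; apply: h; by exists w.
rewrite !ffunE /= in hw.
have hsq := hid _ _ HC w. rewrite /= in hsq.
have hT := Tpos.
have big : T < (nat_of_ord (eval Co w g)).*2.
  move: (eval Co w g) hw hsq => x hx hs.
  have := f_equal (@nat_of_ord _) hs.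
  have : nat_of_ord x <> 0.
    move=> h0; apply: hx; apply: val_inj; by rewrite /= h0 v_bot.
  rewrite v_mul /nmul. case: ifP => ? ; lia.
pose mu := [ffun i => T < (nat_of_ord (w i)).*2].
have ee : eval Co (fun i => rd (w i)) g = eval Co (bw mu) g.
  apply: eval_ext => i. by rewrite /rd /bw ffunE.
have eb := eval_bool mu g.
apply/card_gt0P. exists mu. rewrite inE.
move: eb; rewrite -ee eval_rd /rd big. case: (eval bool_ops mu g) => // /(f_equal (@nat_of_ord _)).
rewrite v_top v_bot. lia.
Qed.

Lemma ji_nidem (g : form n) : join_irred g -> ~ Defs.idempotent g -> cnt g = 0.
Proof.
move=> [_ hj] nid.
have e : nm_equiv g (FOr (FConj g g) (FAnd g (FImp g FBot))).
  apply/equiv_sem/ffunP => w. rewrite !ffunE /=. move: (eval Co w g) => x. have := ltn_ord x.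
  rewrite /Tn => hx; apply: val_inj => /=; cval; rewrite /Tn; split_ifs; cval; split_ifs; lia.
case: (hj _ _ e) => h.
  exfalso; apply: nid. exact: equiv_sym h.
apply: eq_card0 => mu. rewrite inE /=. apply/negP => hg. have := h _ _ bool_NM mu. by rewrite /= hg.
Qed.

Lemma chi_cnt : is_chi_plus (fun phi : form n => INR (cnt phi)).
Proof.
split; [|split; [|split]].
- move=> a b h. by rewrite (cnt_equiv h).
- move=> a b. rewrite -!plus_INR. congr INR. exact: cnt_val.
- by rewrite cnt_bot.
- move=> g hj. split => hid.
    by rewrite (ji_idem hj hid).
  by rewrite (ji_nidem hj hid).
Qed.

Definition below (f : {ffun {ffun 'I_n -> C} -> C}) :=
  [set h : {ffun {ffun 'I_n -> C} -> C} | [forall w, h w <= f w]].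

Lemma below_lt (f g : {ffun {ffun 'I_n -> C} -> C}) : (forall w, f w <= g w) -> f <> g -> #|below f| < #|below g|.
Proof.
move=> fg ne. apply: proper_card. apply/properP; split.
  apply/subsetP => h; rewrite !inE => /forallP hf; apply/forallP => w.
  exact: leq_trans (hf w) (fg w).
exists g; first by rewrite inE; apply/forallP => w.
rewrite inE; apply/negP => /forallP hg. apply: ne. apply/ffunP => w. apply: val_inj.
apply/eqP; by rewrite eqn_leq fg hg.
Qed.

Lemma uniq_chi nu : is_chi_plus nu ->
  forall k (phi : form n), #|below (sem phi)| < k -> nu phi = INR (cnt phi).
Proof.
move=> [hr [hv [hb hji]]]. elim=> // k IH phi hk.
case: (classic (nm_equiv phi FBot)) => hbot.
  by rewrite (hr _ _ hbot) hb (cnt_equiv hbot) cnt_bot.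
case: (classic (join_irred phi)) => hj.
  have [h1 h0] := hji _ hj. case: (classic (Defs.idempotent phi)) => hid.
    by rewrite (h1 hid) (ji_idem hj hid).
  by rewrite (h0 hid) (ji_nidem hj hid).
have [a [b [e [na nb]]]] : exists a b, nm_equiv phi (FOr a b) /\ ~ nm_equiv phi a /\ ~ nm_equiv phi b.
  apply: NNPP => hn. apply: hj; split => // a b e. apply: NNPP => hab. apply: hn.
  exists a, b. split => //. split => h; apply: hab; [left|right] => //.
have se := proj1 (equiv_sem _ _) e.
have la : forall w, sem a w <= sem phi w.
  move=> w; rewrite se !ffunE /= v_join. exact: leq_maxl.
have lb : forall w, sem b w <= sem phi w.
  move=> w; rewrite se !ffunE /= v_join. exact: leq_maxr.
have lab : forall w, sem (FAnd a b) w <= sem a w.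
  move=> w; rewrite !ffunE /= v_meet. exact: geq_minl.
have nea : sem a <> sem phi.
  move=> h; apply: na; apply/equiv_sem; by rewrite h.
have neb : sem b <> sem phi.
  move=> h; apply: nb; apply/equiv_sem; by rewrite h.
have neab : sem (FAnd a b) <> sem phi.
  move=> h; apply: nea. apply/ffunP => w. apply: val_inj; apply/eqP.
  rewrite eqn_leq la /=. have := lab w. by rewrite h.
have ha : nu a = INR (cnt a).
  apply: IH. have := below_lt la nea. lia.
have hb' : nu b = INR (cnt b).
  apply: IH. have := below_lt lb neb. lia.
have hab : nu (FAnd a b) = INR (cnt (FAnd a b)).
  apply: IH. have := below_lt (fun w => leq_trans (lab w) (la w)) neab. lia.
rewrite (hr _ _ e) (cnt_equiv e).
have h1 := hv a b.
have h2 : (INR (cnt a) + INR (cnt b) = INR (cnt (FOr a b)) + INR (cnt (FAnd a b)))%R.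
  rewrite -!plus_INR. congr INR. exact: cnt_val.
lra.
Qed.
End Main.

Theorem theorem8 (n : nat) (hn : (1 <= n)%N) :
  (exists nu : form n -> R, is_chi_plus nu) /\
  forall nu : form n -> R, is_chi_plus nu ->
    forall phi : form n,
      nu phi = INR #|[set mu : {ffun 'I_n -> bool} | eval bool_ops mu phi]|.
Proof.
split; first by exists (fun phi => INR (cnt phi)); exact: chi_cnt.
move=> nu hnu phi. exact: (uniq_chi hnu (ltnSn _)).
Qed.
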